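(* Let $G$ be a finite group and let $\vec{\mathcal{C}}$ be a directed cycle of $\vec{\mathcal{P}}(G)$. Then $\vec{\mathcal{C}}$ is a maximal directed cycle if and only if its vertex set equals $[x]_{\diamond}$ for some $x\in G$ with $|[x]_{\diamond}|\geq3$.
   Context: The directed power graph $\vec{\mathcal{P}}(G)$ has vertex set $G$ and an arc $(x,y)$ iff $x\neq y$ and $y=x^m$ for some positive integer $m$. $x\diamond y$ iff $\langle x\rangle=\langle y\rangle$; $[x]_\diamond$ is the class of $x$. A directed cycle is a sequence $x_1,\dots,x_k,x_1$ of $k\ge3$ distinct vertices with arcs $(x_i,x_{i+1})$ for $i<k$ and $(x_k,x_1)$ (a subdigraph). A directed cycle is maximal if there is no directed cycle of the digraph whose vertex set properly contains its vertex set. *)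

(* Defs.v *)
From mathcomp Require Import all_boot all_fingroup.
Set Implicit Arguments. Unset Strict Implicit. Unset Printing Implicit Defensive.
Local Open Scope group_scope.

Definition dpg_arc (gT : finGroupType) (x y : gT) : Prop :=
  x <> y /\ exists m : nat, (0 < m)%N /\ y = x ^+ m.

(* A directed cycle x_1, ..., x_k, x_1 (k >= 3, distinct vertices),
   given as the sequence [:: x_1; ...; x_k]. *)
Definition is_dcycle (gT : finGroupType) (s : seq gT) : Prop :=
  [/\ (3 <= size s)%N, uniq s &
      forall i : nat, (i < size s)%N ->
        dpg_arc (nth 1 s i) (nth 1 s (i.+1 %% size s))].

Definition dcycle_vertices (gT : finGroupType) (s : seq gT) : {set gT} :=
  [set x in s].

Definition max_dcycle (gT : finGroupType) (s : seq gT) : Prop :=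
  is_dcycle s /\
  ~ (exists t : seq gT, is_dcycle t /\ dcycle_vertices s \proper dcycle_vertices t).

Definition diamond_class (gT : finGroupType) (x : gT) : {set gT} :=
  [set y | <[y]> == <[x]>].

(* Main.v *)
Require Import Defs.
From mathcomp Require Import all_boot all_fingroup.
Set Implicit Arguments. Unset Strict Implicit. Unset Printing Implicit Defensive.
Local Open Scope group_scope.

Lemma arc_sub (gT : finGroupType) (x y : gT) : dpg_arc x y -> <[y]> \subset <[x]>.
Proof. by case=> _ [m [_ ->]]; apply: cycleX. Qed.

Lemma dcycle_chain (gT : finGroupType) (s : seq gT) : is_dcycle s ->
  forall i j, (i <= j)%N -> (j < size s)%N -> <[nth 1 s j]> \subset <[nth 1 s i]>.
Proof.
case=> Hn _ Ha i j Hij; elim: j Hij => [|j IH].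
  by rewrite leqn0 => /eqP ->.
rewrite leq_eqVlt => /orP [/eqP -> //| Hij] Hj.
apply: subset_trans (IH Hij (ltnW Hj)).
have := arc_sub (Ha j (ltnW Hj)); by rewrite modn_small.
Qed.

Lemma dcycle_all (gT : finGroupType) (s : seq gT) : is_dcycle s ->
  forall y, y \in s -> <[y]> = <[nth 1 s 0]>.
Proof.
move=> Hc y /(nthP 1) [i Hi <-].
have Hc' := Hc; case: Hc' => Hn _ Ha.
have Hl : (size s).-1 < size s by rewrite prednK ?leqnn // (leq_trans _ Hn).
apply/eqP; rewrite eqEsubset; apply/andP; split.
  by apply: dcycle_chain.
have H0 := arc_sub (Ha _ Hl).
rewrite prednK ?modnn in H0; last by rewrite (leq_trans _ Hn).
apply: subset_trans H0 _; apply: dcycle_chain => //.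
by rewrite -ltnS prednK // (leq_trans _ Hn).
Qed.

Lemma same_arc (gT : finGroupType) (y z : gT) : <[y]> = <[z]> -> y != z -> dpg_arc y z.
Proof.
move=> E Hne; split; first by apply/eqP.
have : z \in <[y]> by rewrite E cycle_id.
case/cycleP=> i ->; case: i => [|i].
  by exists #[y]; rewrite expg_order order_gt0.
by exists i.+1.
Qed.

Lemma enum_dcycle (gT : finGroupType) (x : gT) :
  (3 <= #|diamond_class x|)%N -> is_dcycle (enum (diamond_class x)).
Proof.
move=> H3; set e := enum _.
have Hs : size e = #|diamond_class x| by rewrite cardE.
split; first by rewrite Hs.
  exact: enum_uniq.
move=> i Hi.
have Hn : (0 < size e)%N by rewrite (leq_trans _ Hi).
have Hj : (i.+1 %% size e < size e)%N by rewrite ltn_mod.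
have Hm : forall k, (k < size e)%N -> <[nth 1 e k]> = <[x]>.
  move=> k Hk; have := mem_nth 1 Hk; rewrite mem_enum inE; exact/eqP.
apply: same_arc; first by rewrite Hm // Hm.
rewrite nth_uniq ?enum_uniq //.
case: (ltnP i.+1 (size e)) => Hi1.
  by rewrite modn_small // neq_ltn ltnSn.
have Ee : size e = i.+1 by apply: anti_leq; rewrite Hi1 Hi.
rewrite Ee.
rewrite modnn; apply/negP => /eqP Ei.
by move: H3; rewrite -Hs Ee Ei.
Qed.

Lemma verts_sub (gT : finGroupType) (s : seq gT) : is_dcycle s ->
  dcycle_vertices s \subset diamond_class (nth 1 s 0).
Proof.
move=> Hc; apply/subsetP => y; rewrite inE => Hy.
by rewrite inE (dcycle_all Hc Hy).
Qed.

Theorem mainTheorem3 (gT : finGroupType) (s : seq gT) :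
  is_dcycle s ->
  (max_dcycle s <->
   exists x : gT, dcycle_vertices s = diamond_class x /\ (3 <= #|diamond_class x|)%N).
Proof.
move=> Hc.
have Hsz : #|dcycle_vertices s| = size s.
  rewrite /dcycle_vertices cardsE; apply/card_uniqP; by case: Hc.
have Hn : (3 <= size s)%N by case: Hc.
split.
  case=> _ Hnm.
  have Hsub := verts_sub Hc.
  have H3 : (3 <= #|diamond_class (nth 1%g s 0)|)%N.
    by rewrite (leq_trans Hn) // -Hsz subset_leq_card.
  exists (nth 1%g s 0); split => //.
  apply/eqP; apply/negPn/negP => Hne; apply: Hnm.
  exists (enum (diamond_class (nth 1%g s 0))); split; first exact: enum_dcycle.
  have -> : dcycle_vertices (enum (diamond_class (nth 1%g s 0))) =
            diamond_class (nth 1%g s 0).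
    by apply/setP => z; rewrite inE mem_enum.
  by rewrite properEneq Hne Hsub.
case=> x [EV H3]; split => //.
case=> t [Ht Hp].
have Hy : nth 1%g s 0 \in dcycle_vertices s.
  by rewrite inE mem_nth // (leq_trans _ Hn).
have Hyt : nth 1%g s 0 \in dcycle_vertices t.
  by apply: (subsetP (proper_sub Hp)).
have Ey1 : <[nth 1%g s 0]> = <[nth 1%g t 0]>.
  by move: Hyt; rewrite inE => /(dcycle_all Ht).
have Ey2 : <[nth 1%g s 0]> = <[x]>.
  by move: Hy; rewrite EV inE => /eqP.
have Hsub : dcycle_vertices t \subset dcycle_vertices s.
  apply/subsetP => z; rewrite inE => Hz.
  by rewrite EV inE (dcycle_all Ht Hz) -Ey1 Ey2.
by have := proper_sub_trans Hp Hsub; rewrite properxx.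
Qed.
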